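(* Assume (A1), (A2), (A3) (see context). Then $\mathrm x\in\mathbb R^n$ and $\mathrm y\in\mathbb R^{p+q}$ are optimal solutions of (P) and (D), respectively, if and only if there exist $\mathrm Z\in\mathbb R^{r(p+q)}$ and $\mathrm Y=\mathbf 1_m\otimes\mathrm y$ such that $0\in\Phi(\mathrm x,\mathrm Y,\mathrm Z)$.
   Context: Let $m\ge2$, $n_1,\dots,n_m\ge1$, $p,q\ge0$ integers, $n=\sum_in_i$, $\mathcal V=\{1,\dots,m\}$. For $i\in\mathcal V$ let $f_i:\mathbb R^{n_i}\to\mathbb R$, $A_i\in\mathbb R^{p\times n_i}$, $b_i\in\mathbb R^p$, $g_i:\mathbb R^{n_i}\to\mathbb R^q$, $\Omega_i\subseteq\mathbb R^{n_i}$, $G_i(\mathrm x_i)=\mathrm{col}(A_i\mathrm x_i-b_i,g_i(\mathrm x_i))\in\mathbb R^{p+q}$, $\mathcal K=\{0_p\}\times\mathbb R^q_-$, $\mathcal K^\circ=\mathbb R^p\times\mathbb R^q_+$. Problem (P): minimize $\sum_if_i(\mathrm x_i)$ over $\mathrm x=\mathrm{col}(\mathrm x_1,\dots,\mathrm x_m)$ s.t. $\sum_iG_i(\mathrm x_i)\in\mathcal K$, $\mathrm x_i\in\Omega_i$. With $\delta_S$ the indicator of $S$, $\ell_i(\mathrm x_i,\mathrm y)=f_i(\mathrm x_i)+\mathrm y^\top G_i(\mathrm x_i)+\delta_{\Omega_i}(\mathrm x_i)-\delta_{\mathcal K^\circ}(\mathrm y)$; dual (D): maximize $\sum_i\inf_{\mathrm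 x_i}\ell_i(\mathrm x_i,\mathrm y)$ over $\mathrm y\in\mathbb R^{p+q}$. Assumptions. (A1) $\mathcal G=(\mathcal V,\mathcal E)$ connected undirected; $L\in\mathbb R^{m\times m}$ symmetric, compatible with $\mathcal G$ ($L_{ij}=0$ for $i\ne j$, $(i,j)\notin\mathcal E$, and $\mathrm{null}(L)=\mathrm{span}\{\mathbf 1_m\}$), $L=U^\top U$ with $U\in\mathbb R^{r\times m}$ full row rank, $U\mathbf 1_m=0$. (A2) $f_i$ and components of $g_i$ proper closed convex, $\Omega_i$ nonempty closed convex, (P) has an optimal solution. (A3) there is $\bar{\mathrm x}$ with $\bar{\mathrm x}_i\in\mathrm{int}\,\Omega_i$, $\sum_i(A_i\bar{\mathrm x}_i-b_i)=0$, $\sum_ig_i(\bar{\mathrm x}_i)<0$. Operator. $\mathbf U=U\otimes I_{p+q}$; for $\mathrm Y=\mathrm{col}(\mathrm y_1,\dots,\mathrm y_m)$, $\mathrm y_i\in\mathbb R^{p+q}$, $\mathcal L(\mathrm x,\mathrm Y)=\sum_i\ell_i(\mathrm x_i,\mathrm y_i)$; $\partial_{\mathrm x}\mathcal L$ is the convex subdifferential in $\mathrm x$, $\partial_{\mathrm Y}\mathcal L:=-\partial_{\mathrm Y}[-\mathcal L]$; $\Phi(\mathrm x,\mathrm Y,\mathrm Z)=\partial_{\mathrm x}\mathcal L(\mathrm x,\mathrm Y)\times(-\partial_{\mathrm Y}\mathcal L(\mathrm x,\mathrm Y)+\mathbf U^\top\mathrm Z)\times\{-\mathbf U\mathrm Y\}$.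 *)

(* Defs.v *)
From HB Require Import structures.
From mathcomp Require Import all_boot all_order all_algebra.
From mathcomp Require Import all_classical all_reals all_analysis.
Import numFieldNormedType.Exports.
Set Implicit Arguments. Unset Strict Implicit. Unset Printing Implicit Defensive.
Import Order.TTheory GRing.Theory Num.Theory.
Local Open Scope ring_scope.
Local Open Scope classical_set_scope.

Section Defs.
Variable R : realType.

Definition vdot (k : nat) (u v : 'cV[R]_k) : R := (u^T *m v) 0 0.

Definition cvx_fun (k : nat) (h : 'cV[R]_k -> R) :=
  forall (x y : 'cV[R]_k) (t : R), 0 <= t <= 1 ->
    h (t *: x + (1 - t) *: y) <= t * h x + (1 - t) * h y.
Definition cvx_set (k : nat) (S : set 'cV[R]_k) :=
  forall (x y : 'cV[R]_k) (t : R), S x -> S y -> 0 <= t <= 1 ->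
    S (t *: x + (1 - t) *: y).

Definition indic (T : Type) (S : set T) (x : T) : \bar R :=
  if x \in S then 0%E else +oo%E.

Definition Kcone (p q : nat) : set 'cV[R]_(p + q) :=
  [set v | usubmx v = 0 /\ forall j, dsubmx v j 0 <= 0].
Definition Kpolar (p q : nat) : set 'cV[R]_(p + q) :=
  [set v | forall j, 0 <= dsubmx v j 0].

Definition Gfun (p q k : nat) (A : 'M[R]_(p, k)) (b : 'cV[R]_p)
  (g : 'cV[R]_k -> 'cV[R]_q) (x : 'cV[R]_k) : 'cV[R]_(p + q) :=
  col_mx (A *m x - b) (g x).

Definition ell (p q k : nat) (f : 'cV[R]_k -> R) (A : 'M[R]_(p, k))
  (b : 'cV[R]_p) (g : 'cV[R]_k -> 'cV[R]_q) (Om : set 'cV[R]_k)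
  (x : 'cV[R]_k) (y : 'cV[R]_(p + q)) : \bar R :=
  ((f x + vdot y (Gfun A b g x))%:E + indic Om x - indic (@Kpolar p q) y)%E.

Definition famdot (k : nat) (d : 'I_k -> nat)
  (u v : forall i : 'I_k, 'cV[R]_(d i)) : R :=
  \sum_(i < k) vdot (u i) (v i).

(* convex subdifferential of an extended-real-valued function on
   prod_i R^{d_i}; empty where the function is not finite. *)
Definition subdiff (k : nat) (d : 'I_k -> nat)
  (phi : (forall i : 'I_k, 'cV[R]_(d i)) -> \bar R)
  (z : forall i : 'I_k, 'cV[R]_(d i)) : set (forall i : 'I_k, 'cV[R]_(d i)) :=
  [set v | phi z \is a fin_num /\
     forall z' : forall i : 'I_k, 'cV[R]_(d i),
       (phi z + (famdot v (fun i => z' i - z i))%:E <= phi z')%E].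

(* Bold U = U (x) I_{p+q} acting on stacked vectors, and its transpose *)
Definition bU (r m s : nat) (U : 'M[R]_(r, m)) (Y : 'I_m -> 'cV[R]_s)
  : 'I_r -> 'cV[R]_s := fun k => \sum_(j < m) U k j *: Y j.
Definition bUt (r m s : nat) (U : 'M[R]_(r, m)) (Z : 'I_r -> 'cV[R]_s)
  : 'I_m -> 'cV[R]_s := fun j => \sum_(k < r) U k j *: Z k.

Unset Implicit Arguments.
Section Problem.
Variables (m : nat) (n : 'I_m -> nat) (p q : nat).
Variables (f : forall i : 'I_m, 'cV[R]_(n i) -> R)
          (A : forall i : 'I_m, 'M[R]_(p, n i))
          (b : 'I_m -> 'cV[R]_p)
          (g : forall i : 'I_m, 'cV[R]_(n i) -> 'cV[R]_q)
          (Om : forall i : 'I_m, set 'cV[R]_(n i)).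

Definition primal_obj (x : forall i : 'I_m, 'cV[R]_(n i)) : R :=
  \sum_(i < m) f i (x i).

Definition primal_feasible (x : forall i : 'I_m, 'cV[R]_(n i)) : Prop :=
  @Kcone p q (\sum_(i < m) Gfun (A i) (b i) (g i) (x i)) /\
  forall i, Om i (x i).

Definition primal_opt (x : forall i : 'I_m, 'cV[R]_(n i)) : Prop :=
  primal_feasible x /\
  forall x', primal_feasible x' -> primal_obj x <= primal_obj x'.

Definition dual_fun (y : 'cV[R]_(p + q)) : \bar R :=
  (\sum_(i < m) ereal_inf (range (fun xi => ell (f i) (A i) (b i) (g i) (Om i) xi y)))%E.

Definition dual_opt (y : 'cV[R]_(p + q)) : Prop :=
  forall y', (dual_fun y' <= dual_fun y)%E.

Definition Lag (x : forall i : 'I_m, 'cV[R]_(n i)) (Y : 'I_m -> 'cV[R]_(p + q))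
  : \bar R :=
  (\sum_(i < m) ell (f i) (A i) (b i) (g i) (Om i) (x i) (Y i))%E.

Definition partial_x (x : forall i : 'I_m, 'cV[R]_(n i))
  (Y : 'I_m -> 'cV[R]_(p + q)) : set (forall i : 'I_m, 'cV[R]_(n i)) :=
  subdiff (fun x' => Lag x' Y) x.

Definition partial_Y (x : forall i : 'I_m, 'cV[R]_(n i))
  (Y : 'I_m -> 'cV[R]_(p + q)) : set ('I_m -> 'cV[R]_(p + q)) :=
  [set (fun j => - w j) | w in
     @subdiff m (fun _ => (p + q)%N) (fun Y' => (- Lag x Y')%E) Y].

Definition Phi (r : nat) (U : 'M[R]_(r, m))
  (x : forall i : 'I_m, 'cV[R]_(n i)) (Y : 'I_m -> 'cV[R]_(p + q))
  (Z : 'I_r -> 'cV[R]_(p + q)) :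
  set (((forall i : 'I_m, 'cV[R]_(n i)) * ('I_m -> 'cV[R]_(p + q)))
       * ('I_r -> 'cV[R]_(p + q))) :=
  [set t | partial_x x Y t.1.1 /\
     (exists2 w, partial_Y x Y w & t.1.2 = fun j => - w j + bUt U Z j) /\
     t.2 = fun k => - bU U Y k].

End Problem.
End Defs.

Arguments primal_obj {R m n} f x.
Arguments primal_feasible {R m n p q} A b g Om x.
Arguments primal_opt {R m n p q} f A b g Om x.
Arguments dual_fun {R m n p q} f A b g Om y.
Arguments dual_opt {R m n p q} f A b g Om y.
Arguments Lag {R m n p q} f A b g Om x Y.
Arguments partial_x {R m n p q} f A b g Om x Y _.
Arguments partial_Y {R m n p q} f A b g Om x Y _.
Arguments Phi {R m n p q} f A b g Om {r} U x Y Z _.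

(* Main.v *)
Require Import Defs.
From HB Require Import structures.
From mathcomp Require Import all_boot all_order all_algebra.
From mathcomp Require Import all_classical all_reals all_analysis.
From mathcomp Require Import ring lra.
Import numFieldNormedType.Exports.
Import Order.TTheory GRing.Theory Num.Theory.
Local Open Scope ring_scope.
Local Open Scope classical_set_scope.

Section Sep.
Variable R : realType.

Lemma vdotE N (u v : 'cV[R]_N) : vdot u v = \sum_i u i 0 * v i 0.
Proof. by rewrite /vdot !mxE; apply: eq_bigr => i _; rewrite !mxE. Qed.

Lemma vdotC N (u v : 'cV[R]_N) : vdot u v = vdot v u.
Proof. by rewrite !vdotE; apply: eq_bigr => i _; rewrite mulrC. Qed.

Lemma vdotDr N (u v w : 'cV[R]_N) : vdot u (v + w) = vdot u v + vdot u w.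
Proof. by rewrite !vdotE -big_split; apply: eq_bigr => i _; rewrite !mxE mulrDr. Qed.

Lemma vdotZr N (u v : 'cV[R]_N) a : vdot u (a *: v) = a * vdot u v.
Proof. by rewrite !vdotE mulr_sumr; apply: eq_bigr => i _; rewrite !mxE mulrCA. Qed.

Lemma vdotNr N (u v : 'cV[R]_N) : vdot u (- v) = - vdot u v.
Proof. by rewrite -scaleN1r vdotZr mulN1r. Qed.

Lemma vdotBr N (u v w : 'cV[R]_N) : vdot u (v - w) = vdot u v - vdot u w.
Proof. by rewrite vdotDr vdotNr. Qed.

Lemma vdot0r N (u : 'cV[R]_N) : vdot u 0 = 0.
Proof. by rewrite vdotE big1 // => i _; rewrite mxE mulr0. Qed.

Lemma vdotDl N (u v w : 'cV[R]_N) : vdot (v + w) u = vdot v u + vdot w u.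
Proof. by rewrite ![vdot _ u]vdotC vdotDr. Qed.

Lemma vdotZl N (u v : 'cV[R]_N) a : vdot (a *: v) u = a * vdot v u.
Proof. by rewrite ![vdot _ u]vdotC vdotZr. Qed.

Lemma vdot0l N (u : 'cV[R]_N) : vdot 0 u = 0.
Proof. by rewrite vdotC vdot0r. Qed.

Lemma vdotNl N (u v : 'cV[R]_N) : vdot (- v) u = - vdot v u.
Proof. by rewrite ![vdot _ u]vdotC vdotNr. Qed.

Lemma vdotBl N (u v w : 'cV[R]_N) : vdot (v - w) u = vdot v u - vdot w u.
Proof. by rewrite vdotDl vdotNl. Qed.

Lemma vdot_sumr N k (u : 'cV[R]_N) (F : 'I_k -> 'cV[R]_N) :
  vdot u (\sum_(j < k) F j) = \sum_(j < k) vdot u (F j).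
Proof.
elim/big_rec2: _ => [|j x y _ <-]; first by rewrite vdot0r.
by rewrite vdotDr.
Qed.

Lemma vdot_suml N k (u : 'cV[R]_N) (F : 'I_k -> 'cV[R]_N) :
  vdot (\sum_(j < k) F j) u = \sum_(j < k) vdot (F j) u.
Proof. by rewrite vdotC vdot_sumr; apply: eq_bigr => j _; rewrite vdotC. Qed.

Lemma vdot_col_mx N1 N2 (a : 'cV[R]_N1) (b : 'cV[R]_N2) (v : 'cV[R]_(N1 + N2)) :
  vdot (col_mx a b) v = vdot a (usubmx v) + vdot b (dsubmx v).
Proof.
rewrite /vdot -{1}(vsubmxK v) tr_col_mx mul_row_col.
by rewrite mxE.
Qed.

Lemma vdot11 (a c : 'cV[R]_1) : vdot a c = a 0 0 * c 0 0.
Proof. by rewrite vdotE big_ord1. Qed.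

Definition hd {N} (u : 'cV[R]_(1 + N)) : R := usubmx u 0 0.

Lemma vdot_hd N (a : R) (b : 'cV[R]_N) (v : 'cV[R]_(1 + N)) :
  vdot (col_mx a%:M b) v = a * hd v + vdot b (dsubmx v).
Proof. by rewrite vdot_col_mx vdot11 mxE eqxx mulr1n. Qed.

Lemma hdD N (u v : 'cV[R]_(1 + N)) : hd (u + v) = hd u + hd v.
Proof. by rewrite /hd linearD mxE. Qed.

Lemma hdZ N a (u : 'cV[R]_(1 + N)) : hd (a *: u) = a * hd u.
Proof. by rewrite /hd linearZ mxE. Qed.

Lemma hd_tl0 {N} {u : 'cV[R]_(1 + N)} : hd u = 0 -> dsubmx u = 0 -> u = 0.
Proof.
move=> h1 h2; rewrite -(vsubmxK u) h2 (mx11_scalar (usubmx u)).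
by rewrite -/(hd u) h1 -col_mx0; congr col_mx; apply/matrixP => i j; rewrite !mxE !ord1 eqxx mulr1n.
Qed.

Definition cone_like {N} (K : set 'cV[R]_N) :=
  (forall u v, K u -> K v -> K (u + v)) /\
  (forall t u, 0 < t -> K u -> K (t *: u)).

Definition sep_goal {N} (K : set 'cV[R]_N) :=
  exists l, (forall u, K u -> 0 <= vdot l u) /\ exists2 u, K u & 0 < vdot l u.

Lemma key_ineq (a c P Q : R) : 0 < a -> 0 < c -> 0 <= c * P + a * Q -> - P / a <= Q / c.
Proof.
move=> a0 c0 h.
rewrite ler_pdivlMr // mulrAC ler_pdivrMr // mulNr.
by rewrite -subr_ge0 opprK addrC [P * c]mulrC [Q * a]mulrC.
Qed.

Lemma stepB N
  (IH : forall K : set 'cV[R]_N, cone_like K -> ~ K 0 -> K !=set0 -> sep_goal K)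
  (K : set 'cV[R]_(1 + N)) : cone_like K -> ~ K 0 ->
  (exists u0, K u0 /\ dsubmx u0 = 0 /\ 0 < hd u0) -> sep_goal K.
Proof.
move=> [KD KZ] K0 [u0 [Ku0 [tu0 hu0]]].
case: (pselect (forall u, K u -> 0 <= hd u)) => [allpos|].
  exists (col_mx 1%:M 0); split.
    by move=> u Ku; rewrite vdot_hd vdot0l addr0 mul1r; apply: allpos.
  by exists u0 => //; rewrite vdot_hd vdot0l addr0 mul1r.
move=> /existsNP [u2 /not_implyP [Ku2 /negP]]; rewrite -ltNge => hu2.
pose D := fun d : 'cV[R]_N => exists u, [/\ K u, hd u <= 0 & dsubmx u = d].
have coneD : cone_like D.
  split.
    move=> _ _ [u [Ku hu <-]] [v [Kv hv <-]]; exists (u + v); split.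
    - exact: KD.
    - by rewrite hdD; lra.
    - exact: linearD.
  move=> t _ t0 [u [Ku hu <-]]; exists (t *: u); split.
  - exact: KZ.
  - by rewrite hdZ pmulr_rle0.
  - exact: linearZ.
have comb : forall u w, K u -> K w -> 0 < hd u -> hd w < 0 ->
    D (dsubmx ((- hd w) *: u + hd u *: w)).
  move=> u w Ku Kw hu hw; exists ((- hd w) *: u + hd u *: w); split => //.
    by apply: KD; apply: KZ => //; rewrite oppr_gt0.
  by rewrite hdD !hdZ mulNr mulrC addNr.
have D0 : ~ D 0.
  move=> [u [Ku hu tu]].
  have hu' : hd u < 0.
    rewrite lt_neqAle hu andbT; apply/eqP => h0.
    by apply: K0; rewrite -(hd_tl0 h0 tu).
  have := KD _ _ (KZ (hd u0) _ hu0 Ku) (KZ (- hd u) _ _ Ku0).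
  rewrite oppr_gt0 => /(_ hu').
  have -> : hd u0 *: u + - hd u *: u0 = 0.
    apply: hd_tl0; first by rewrite hdD !hdZ mulNr mulrC addrN.
    by rewrite linearD !linearZ /= tu0 tu !scaler0 addr0.
  exact: K0.
have [psi [psi_ge0 [d1 Dd1 psid1]]] := IH D coneD D0 (ex_intro _ _ (ex_intro _ u2 (And3 Ku2 (ltW hu2) erefl))).
pose S := fun x : R => exists u, [/\ K u, 0 < hd u & x = - vdot psi (dsubmx u) / hd u].
have key : forall u w, K u -> K w -> 0 < hd u -> hd w < 0 ->
    - vdot psi (dsubmx u) / hd u <= vdot psi (dsubmx w) / (- hd w).
  move=> u w Ku Kw hu hw; apply: key_ineq => //; first by rewrite oppr_gt0.
  have := psi_ge0 _ (comb _ _ Ku Kw hu hw).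
  by rewrite linearD !linearZ /= vdotDr !vdotZr.
have S0 : S 0.
  by exists u0; split => //; rewrite tu0 vdot0r oppr0 mul0r.
have Sne : S !=set0 by exists 0.
have ubS : forall w, K w -> hd w < 0 -> ubound S (vdot psi (dsubmx w) / (- hd w)).
  by move=> w Kw hw _ [u [Ku hu ->]]; apply: key.
have hsup : has_sup S by split => //; exists (vdot psi (dsubmx u2) / (- hd u2)); apply: ubS.
pose al := sup S.
have al0 : 0 <= al by apply: sup_upper_bound.
exists (col_mx al%:M psi); split.
  move=> u Ku; rewrite vdot_hd.
  case: (ltgtP (hd u) 0) => hu.
  - have : al <= vdot psi (dsubmx u) / (- hd u) by apply: ge_sup => //; apply: ubS.
    rewrite ler_pdivlMr ?oppr_gt0 // mulrN => h; lra.
  - have : - vdot psi (dsubmx u) / hd u <= al by apply: sup_upper_bound => //; exists u.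
    rewrite ler_pdivrMr // => h; lra.
  - rewrite hu mulr0 add0r; apply: psi_ge0; exists u; split => //; by rewrite hu.
case: (ltgtP al 0) => hal.
- by move: al0; rewrite leNgt hal.
- exists u0 => //; rewrite vdot_hd tu0 vdot0r addr0; exact: mulr_gt0.
- case: Dd1 => u1 [Ku1 hu1 tu1]; exists u1 => //.
  by rewrite vdot_hd hal mul0r add0r tu1.
Qed.

Definition refl {N} (v : 'cV[R]_(1 + N)) : 'cV[R]_(1 + N) :=
  col_mx (- usubmx v) (dsubmx v).

Lemma reflK N : involutive (@refl N).
Proof. by move=> v; rewrite /refl col_mxKu col_mxKd opprK vsubmxK. Qed.

Lemma reflD N (u v : 'cV[R]_(1 + N)) : refl (u + v) = refl u + refl v.
Proof. by rewrite /refl add_col_mx; congr col_mx; rewrite linearD /= ?opprD. Qed.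

Lemma reflZ N a (u : 'cV[R]_(1 + N)) : refl (a *: u) = a *: refl u.
Proof. by rewrite /refl scale_col_mx; congr col_mx; rewrite linearZ /= ?scalerN. Qed.

Lemma vdot_refl N (u v : 'cV[R]_(1 + N)) : vdot (refl u) v = vdot u (refl v).
Proof.
rewrite /refl vdot_col_mx [RHS]vdotC vdot_col_mx !vdotNl.
by rewrite [vdot (usubmx v) _]vdotC [vdot (dsubmx v) _]vdotC.
Qed.

Lemma cone_sep N (K : set 'cV[R]_N) :
  cone_like K -> ~ K 0 -> K !=set0 -> sep_goal K.
Proof.
elim: N K => [|N IH] K cK K0 [u Ku].
  by exfalso; apply: K0; rewrite -(flatmx0 u).
move: K cK K0 u Ku.
change (forall K : set 'cV[R]_(1 + N), cone_like K -> ~ K 0 -> forall u, K u -> sep_goal K).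
move=> K cK K0 u Ku.
case: (pselect (exists u, K u /\ dsubmx u = 0)) => [[u0 [Ku0 tu0]]|].
  have hu0 : hd u0 != 0 by apply/eqP => h; apply: K0; rewrite -(hd_tl0 h tu0).
  case: (ltgtP (hd u0) 0) => hu; last by rewrite hu eqxx in hu0.
    pose K' := fun v : 'cV[R]_(1 + N) => K (refl v).
    have cK' : cone_like K'.
      case: cK => KD KZ; split.
        by move=> x y Kx Ky; rewrite /K' reflD; apply: KD.
      by move=> t x t0 Kx; rewrite /K' reflZ; apply: KZ.
    have K'0 : ~ K' 0 by rewrite /K' /refl !raddf0 ?oppr0 col_mx0.
    have [l [lge [w Kw lw]]] : sep_goal K'.
      apply: (@stepB N IH) => //; exists (refl u0); split; [|split].
      - by rewrite /K' reflK.
      - by rewrite /refl col_mxKd tu0.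
      - by rewrite /hd /refl col_mxKu mxE oppr_gt0.
    exists (refl l); split.
      by move=> v Kv; rewrite vdot_refl; apply: lge; rewrite /K' reflK.
    by exists (refl w) => //; rewrite vdot_refl reflK.
  by apply: (@stepB N IH) => //; exists u0.
move=> nex.
pose D := fun d : 'cV[R]_N => exists2 u, K u & dsubmx u = d.
have cD : cone_like D.
  case: cK => KD KZ; split.
    move=> _ _ [x Kx <-] [y Ky <-]; exists (x + y); [exact: KD | exact: linearD].
  move=> t _ t0 [x Kx <-]; exists (t *: x); [exact: KZ | exact: linearZ].
have D0 : ~ D 0 by move=> [x Kx tx]; apply: nex; exists x.
have [psi [pge [d [x Kx <-] pd]]] := IH D cD D0 (ex_intro _ _ (ex_intro2 _ _ u Ku erefl)).
exists (col_mx 0 psi); split.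
  by move=> v Kv; rewrite vdot_col_mx vdot0l add0r; apply: pge; exists v.
by exists x => //; rewrite vdot_col_mx vdot0l add0r.
Qed.

Lemma convex_sep N (C : set 'cV[R]_N) :
  (forall x y t, C x -> C y -> 0 < t < 1 -> C (t *: x + (1 - t) *: y)) ->
  ~ C 0 -> C !=set0 -> sep_goal C.
Proof.
move=> cC C0 [c0 Cc0].
pose K := fun v => exists t c, [/\ 0 < t, C c & v = t *: c].
have cK : cone_like K.
  split.
    move=> _ _ [t1 [c1 [t10 Cc1 ->]]] [t2 [c2 [t20 Cc2 ->]]].
    have s0 : 0 < t1 + t2 by rewrite addr_gt0.
    exists (t1 + t2), ((t1 / (t1 + t2)) *: c1 + (1 - t1 / (t1 + t2)) *: c2); split => //.
      apply: cC => //; apply/andP; split; first by rewrite divr_gt0.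
      by rewrite ltr_pdivrMr // mul1r ltrDl.
    rewrite scalerDr !scalerA mulrC -mulrA mulVf ?gt_eqF // mulr1.
    congr (_ + _); congr (_ *: _).
    by rewrite mulrBr mulr1 mulrCA mulfV ?gt_eqF // mulr1 addrC addKr.
  move=> t _ t0 [t1 [c1 [t10 Cc1 ->]]]; exists (t * t1), c1; split => //.
    exact: mulr_gt0.
  by rewrite scalerA.
have K0 : ~ K 0.
  move=> [t [c [t0 Cc e]]]; apply: C0.
  have hc : c = 0 by rewrite -[c]scale1r -(mulVf (lt0r_neq0 t0)) -scalerA -e scaler0.
  by rewrite -hc.
have [l [lge [_ [t [c [t0 Cc ->]]] lp]]] := @cone_sep N K cK K0 (ex_intro _ c0 (ex_intro _ 1 (ex_intro _ c0 (And3 ltr01 Cc0 (esym (scale1r c0)))))).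
exists l; split.
  by move=> v Cv; rewrite -[v]scale1r; apply: lge; exists 1, v; split.
exists c => //; move: lp; rewrite vdotZr; rewrite pmulr_rgt0 //.
Qed.

Lemma interior_dir k (x d : 'cV[R]_k) (S : set 'cV[R]_k) :
  S° x -> exists2 e : R, 0 < e & S (x - e *: d).
Proof.
rewrite /interior /= => /nbhs_ballP [e e0 he].
have d1 : 0 < `|d| + 1 by rewrite ltr_wpDl.
exists (e / (2 * (`|d| + 1))); first by rewrite divr_gt0 // mulr_gt0.
apply: he; rewrite mx_norm_ball /ball_ /= opprB addrC subrK normrZ.
rewrite gtr0_norm; last by rewrite divr_gt0 // mulr_gt0.
rewrite mulrAC ltr_pdivrMr ?mulr_gt0 //.
rewrite ltr_pM2l //.
have := normr_ge0 d; lra.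
Qed.

Lemma vdot_split p q (y w : 'cV[R]_(p + q)) :
  vdot y w = vdot (usubmx y) (usubmx w) + vdot (dsubmx y) (dsubmx w).
Proof. by rewrite -{1}(vsubmxK y) vdot_col_mx. Qed.

Lemma KconeP p q (k y : 'cV[R]_(p + q)) : Kcone k -> Kpolar y -> vdot y k <= 0.
Proof.
move=> [k0 kle] yge; rewrite vdot_split k0 vdot0r add0r vdotE.
by apply: sumr_le0 => j _; rewrite mulrC; apply: mulr_le0_ge0.
Qed.

Lemma Kpolar0 p q : Kpolar (0 : 'cV[R]_(p + q)).
Proof. by move=> j; rewrite linear0 mxE. Qed.

Lemma KpolarD p q (y e : 'cV[R]_(p + q)) : Kpolar y -> Kpolar e -> Kpolar (y + e).
Proof. by move=> hy he j; rewrite linearD mxE addr_ge0. Qed.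

Lemma KpolarZ p q (y : 'cV[R]_(p + q)) a : 0 <= a -> Kpolar y -> Kpolar (a *: y).
Proof. by move=> a0 hy j; rewrite linearZ mxE mulr_ge0. Qed.

Lemma eq_col_split p q (u v : 'cV[R]_(p + q)) :
  usubmx u = usubmx v -> dsubmx u = dsubmx v -> u = v.
Proof. by move=> h1 h2; rewrite -(vsubmxK u) -(vsubmxK v) h1 h2. Qed.


Lemma vdot_delta k (u : 'cV[R]_k) j : vdot u (delta_mx j 0) = u j 0.
Proof.
rewrite vdotE (bigD1 j) //= big1 => [|i ij]; first by rewrite !mxE !eqxx mulr1 addr0.
by rewrite !mxE (negbTE ij) mulr0.
Qed.

Lemma lim_ge0 (e mu : R) : 0 <= mu -> (forall t, 0 < t -> 0 <= e + mu * t) -> 0 <= e.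
Proof.
move=> mu0 h; rewrite leNgt; apply/negP => e0.
have m1 : 0 < mu + 1 by rewrite ltr_wpDl.
have t0 : 0 < - e / (mu + 1) by rewrite divr_gt0 // oppr_gt0.
have := h _ t0.
have -> : e + mu * (- e / (mu + 1)) = e / (mu + 1).
  by field; rewrite lt0r_neq0.
by rewrite pmulr_lge0 ?invr_gt0 // leNgt e0.
Qed.

Lemma affine_comb k l (M : 'M[R]_(k, l)) (c : 'cV[R]_k) (x1 x2 : 'cV[R]_l) th :
  M *m (th *: x1 + (1 - th) *: x2) - c = th *: (M *m x1 - c) + (1 - th) *: (M *m x2 - c).
Proof.
rewrite mulmxDr -!scalemxAr; move: (M *m x1) (M *m x2) => u v.
by apply/matrixP => i j; rewrite !mxE; ring.
Qed.

Lemma sum_pos_ex k (F : 'I_k -> R) : 0 < \sum_i F i -> exists i, 0 < F i.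
Proof.
move=> h; apply: contrapT => hn; move: h; rewrite ltNge => /negP; apply.
apply: sumr_le0 => i _; rewrite leNgt; apply/negP => hi; apply: hn; by exists i.
Qed.

Lemma vdot_col_r l (a : R) (w : 'cV[R]_l) (v : 'cV[R]_(1 + l)) :
  vdot v (col_mx a%:M w) = hd v * a + vdot (dsubmx v) w.
Proof. by rewrite vdotC vdot_hd mulrC vdotC. Qed.

Lemma vdot_col0 p q (y : 'cV[R]_(p + q)) w (s : 'cV[R]_q) :
  vdot y (w + col_mx 0 s) = vdot y w + vdot (dsubmx y) s.
Proof. by rewrite vdotDr [vdot y (col_mx _ _)]vdot_split col_mxKu col_mxKd vdot0r add0r. Qed.

Lemma exists_Z N r k (U : 'M[R]_(r, k)) (W : 'I_k -> 'cV[R]_N) :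
  (forall v : 'cV[R]_k, U *m v = 0 -> exists c, v = const_mx c) ->
  \sum_j W j = 0 -> exists Z : 'I_r -> 'cV[R]_N, forall j, bUt U Z j = W j.
Proof.
move=> hU hW.
pose Wt : 'M[R]_(N, k) := \matrix_(l, j) W j l 0.
have : (Wt <= U)%MS.
  rewrite submxE; apply/eqP/matrixP => l j'.
  have hc0 : U *m col j' (cokermx U) = 0 by rewrite colE mulmxA mulmx_coker mul0mx.
  have [c hc] := hU _ hc0.
  rewrite !mxE.
  have -> : \sum_j Wt l j * cokermx U j j' = \sum_j W j l 0 * c.
    apply: eq_bigr => j _; rewrite mxE.
    by have := congr1 (fun M : 'cV[R]_k => M j 0) hc; rewrite /= !mxE => ->.
  rewrite -mulr_suml.
  have := congr1 (fun M : 'cV[R]_N => M l 0) hW; rewrite /= summxE mxE => ->.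
  by rewrite mul0r.
case/submxP => D hD.
exists (fun kk => \col_l D l kk) => j; rewrite /bUt.
apply/matrixP => l c; rewrite ord1 summxE.
have := congr1 (fun M : 'M[R]_(N, k) => M l j) hD; rewrite /= !mxE => ->.
by apply: eq_bigr => kk _; rewrite !mxE mulrC.
Qed.

Lemma famdot0l k (d : 'I_k -> nat) (v : forall i, 'cV[R]_(d i)) :
  famdot (fun i => 0) v = 0.
Proof. by rewrite /famdot big1 // => i _; rewrite vdot0l. Qed.

Lemma famdot_const k N (w : 'I_k -> 'cV[R]_N) (e : 'cV[R]_N) :
  @famdot R k (fun _ => N) w (fun _ => e) = vdot (\sum_j w j) e.
Proof. by rewrite /famdot vdot_suml. Qed.

Lemma rowsum0 r k (U : 'M[R]_(r, k)) kk : U *m (const_mx 1 : 'cV[R]_k) = 0 -> \sum_j U kk j = 0.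
Proof.
move=> h; have := congr1 (fun M : 'cV[R]_r => M kk 0) h; rewrite /= !mxE => e.
transitivity (\sum_j U kk j * (const_mx 1 : 'cV[R]_k) j 0); last exact: e.
by apply: eq_bigr => j _; rewrite mxE mulr1.
Qed.

Lemma sum_bUt N r k (U : 'M[R]_(r, k)) (Z : 'I_r -> 'cV[R]_N) :
  U *m (const_mx 1 : 'cV[R]_k) = 0 -> \sum_j bUt U Z j = 0.
Proof.
move=> h; rewrite /bUt exchange_big /= big1 // => kk _.
by rewrite -scaler_suml rowsum0 // scale0r.
Qed.

Lemma bU_const N r k (U : 'M[R]_(r, k)) (y : 'cV[R]_N) kk :
  U *m (const_mx 1 : 'cV[R]_k) = 0 -> bU U (fun _ => y) kk = 0.
Proof. by move=> h; rewrite /bU -scaler_suml rowsum0 // scale0r. Qed.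
Section Prob.
Variables (m : nat) (n : 'I_m -> nat) (p q : nat).
Variables (f : forall i : 'I_m, 'cV[R]_(n i) -> R)
          (A : forall i : 'I_m, 'M[R]_(p, n i))
          (b : 'I_m -> 'cV[R]_p)
          (g : forall i : 'I_m, 'cV[R]_(n i) -> 'cV[R]_q)
          (Om : forall i : 'I_m, set 'cV[R]_(n i)).

Local Notation T := (forall i : 'I_m, 'cV[R]_(n i)).
Definition Gi {i} (z : 'cV[R]_(n i)) := Gfun (A i) (b i) (g i) z.
Definition hG (x : T) := \sum_i Gi (x i).
Definition inX (x : T) := forall i, Om i (x i).
Definition ell_ {i} (z : 'cV[R]_(n i)) (y : 'cV[R]_(p + q)) :=
  ell (f i) (A i) (b i) (g i) (Om i) z y.
Definition Fo (x : T) := primal_obj f x.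

Lemma ell_fin {i} {z : 'cV[R]_(n i)} {y : 'cV[R]_(p + q)} : Kpolar y -> Om i z -> ell_ z y = (f i z + vdot y (Gi z))%:E.
Proof.
move=> hy hz; rewrite /ell_ /ell /Defs.indic.
by rewrite (mem_set hz) (mem_set hy) adde0 oppe0 adde0.
Qed.

Lemma ell_pinfty {i} {z : 'cV[R]_(n i)} {y : 'cV[R]_(p + q)} : Kpolar y -> ~ Om i z -> ell_ z y = +oo%E.
Proof.
move=> hy hz; rewrite /ell_ /ell /Defs.indic.
by rewrite (mem_set hy) (memNset hz) oppe0 adde0.
Qed.

Lemma ell_ninfty {i} {z : 'cV[R]_(n i)} {y : 'cV[R]_(p + q)} : ~ Kpolar y -> ell_ z y = -oo%E.
Proof.
move=> hy; rewrite /ell_ /ell /Defs.indic (memNset hy).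
by rewrite addeNy.
Qed.

Lemma ell_neqNy {i} (z : 'cV[R]_(n i)) {y : 'cV[R]_(p + q)} : Kpolar y -> ell_ z y != -oo%E.
Proof.
move=> hy; case: (pselect (Om i z)) => hz.
  by rewrite (ell_fin hy hz).
by rewrite (ell_pinfty hy hz).
Qed.

Lemma Lag_fin (x : T) (Y : 'I_m -> 'cV[R]_(p + q)) :
  inX x -> (forall j, Kpolar (Y j)) ->
  Lag f A b g Om x Y = (Fo x + \sum_j vdot (Y j) (Gi (x j)))%:E.
Proof.
move=> hx hY; rewrite /Lag.
rewrite (eq_bigr (fun j => (f j (x j) + vdot (Y j) (Gi (x j)))%:E)).
  by rewrite sumEFin big_split.
by move=> j _; rewrite -(ell_fin (hY j) (hx j)).
Qed.

Lemma Lag_ninfty (x : T) (Y : 'I_m -> 'cV[R]_(p + q)) :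
  (exists j, ~ Kpolar (Y j)) -> Lag f A b g Om x Y = -oo%E.
Proof.
move=> [j hj]; rewrite /Lag; apply/esum_eqNyP; exists j; split;
  [by rewrite ?mem_index_enum | by [] | exact: (ell_ninfty (i := j))].
Qed.

Lemma Lag_pinfty (x : T) (Y : 'I_m -> 'cV[R]_(p + q)) :
  (forall j, Kpolar (Y j)) -> ~ inX x -> Lag f A b g Om x Y = +oo%E.
Proof.
move=> hY /existsNP [j hj]; rewrite /Lag; apply/esum_eqyP.
  by move=> i _; apply: (ell_neqNy (i := i)).
exists j; split;
  [by rewrite ?mem_index_enum | by [] | exact: (ell_pinfty (i := j))].
Qed.


Definition upd (x : T) {i : 'I_m} (z : 'cV[R]_(n i)) : T :=
  fun j => match @eqP _ i j with
           | ReflectT e => eq_rect i (fun k => 'cV[R]_(n k)) z j e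
           | ReflectF _ => x j end.

Lemma upd_same (x : T) (i : 'I_m) (z : 'cV[R]_(n i)) : upd x z i = z.
Proof.
rewrite /upd; case: (@eqP _ i i) => [e|]; last by [].
by rewrite (eq_irrelevance e erefl).
Qed.

Lemma upd_other (x : T) (i : 'I_m) (z : 'cV[R]_(n i)) j : i != j -> upd x z j = x j.
Proof. by move=> ij; rewrite /upd; case: (@eqP _ i j) => // e; rewrite e eqxx in ij. Qed.

Lemma sum_upd (V : zmodType) (Fn : forall j, 'cV[R]_(n j) -> V) x i z :
  \sum_j Fn j (upd x z j) = \sum_j Fn j (x j) - Fn i (x i) + Fn i z.
Proof.
rewrite (bigD1 i) //= [in RHS](bigD1 i) //= upd_same.
rewrite [Fn i (x i) + _]addrC addrK addrC; congr (_ + _); apply: eq_bigr => j ij.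
by rewrite upd_other // eq_sym.
Qed.

Lemma upd_inX (x : T) (i : 'I_m) (z : 'cV[R]_(n i)) : inX x -> Om i z -> inX (upd x z).
Proof.
move=> hx hz j; case: (eqVneq i j) => [<-|ij]; first by rewrite upd_same.
by rewrite upd_other.
Qed.

Lemma vdot_hG y (x : T) : vdot y (hG x) = \sum_j vdot y (Gi (x j)).
Proof. by rewrite /hG vdot_sumr. Qed.

Lemma Lag_const (x : T) y : inX x -> Kpolar y ->
  Lag f A b g Om x (fun _ => y) = (Fo x + vdot y (hG x))%:E.
Proof. by move=> hx hy; rewrite Lag_fin // vdot_hG. Qed.

Lemma sep_min (x : T) y : Kpolar y -> inX x ->
  (forall x', inX x' -> Fo x + vdot y (hG x) <= Fo x' + vdot y (hG x')) ->
  forall i, (ell_ (x i) y <= ereal_inf (range (fun z => ell_ (i:=i) z y)))%E.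
Proof.
move=> hy hx hmin i; apply/ereal_infP => _ [z _ <-].
case: (pselect (Om i z)) => hz; last by rewrite (ell_pinfty hy hz) leey.
rewrite (ell_fin hy hz) (ell_fin hy (hx i)) lee_fin.
have := hmin _ (@upd_inX x i z hx hz).
rewrite !vdot_hG /Fo /primal_obj.
rewrite (@sum_upd _ (fun j z => f j z) x i z) (@sum_upd _ (fun j z => vdot y (Gi z)) x i z).
lra.
Qed.

Lemma dual_ge (x : T) y : Kpolar y -> inX x ->
  (forall x', inX x' -> Fo x + vdot y (hG x) <= Fo x' + vdot y (hG x')) ->
  ((Fo x + vdot y (hG x))%:E <= dual_fun f A b g Om y)%E.
Proof.
move=> hy hx hmin; rewrite -Lag_const // /Lag /dual_fun.
by apply: lee_sum => i _; apply: sep_min.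
Qed.

Lemma dual_le (x : T) y :
  (dual_fun f A b g Om y <= Lag f A b g Om x (fun _ => y))%E.
Proof.
rewrite /Lag /dual_fun; apply: lee_sum => i _.
by apply: ereal_inf_lbound; exists (x i).
Qed.


Lemma usub_hG (x : T) : usubmx (hG x) = \sum_i (A i *m x i - b i).
Proof. by rewrite /hG raddf_sum; apply: eq_bigr => i _; exact: col_mxKu. Qed.

Lemma dsub_hG (x : T) : dsubmx (hG x) = \sum_i g i (x i).
Proof. by rewrite /hG raddf_sum; apply: eq_bigr => i _; exact: col_mxKd. Qed.


Lemma strong (xs : T)
  (Hcf : forall i, cvx_fun (f i))
  (Hcg : forall i (j : 'I_q), cvx_fun (fun x => g i x j 0))
  (HcO : forall i, cvx_set (Om i)) :
  primal_opt f A b g Om xs ->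
  (exists xbar : T,
      (forall i, (Om i)° (xbar i)) /\
      \sum_(i < m) (A i *m xbar i - b i) = 0 /\
      (forall j : 'I_q, (\sum_(i < m) g i (xbar i)) j 0 < 0)) ->
  exists y0, Kpolar y0 /\ forall x, inX x -> Fo xs <= Fo x + vdot y0 (hG x).
Proof.
move=> [[Kxs Xxs] xopt] [xbar [Xbar [hAbar ggbar]]].
set Fs := Fo xs.
pose C := fun v : 'cV[R]_(1 + (p + q)) => exists x t (s : 'cV[R]_q),
  [/\ inX x, 0 < t, (forall j, 0 <= s j 0) &
      v = col_mx (Fo x - Fs + t)%:M (hG x + col_mx 0 s)].
have convC : forall v1 v2 th, C v1 -> C v2 -> 0 < th < 1 -> C (th *: v1 + (1 - th) *: v2).
  move=> _ _ th [x1 [t1 [s1 [X1 t10 s10 ->]]]] [x2 [t2 [s2 [X2 t20 s20 ->]]]] /andP [th0 th1].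
  have th01 : 0 <= th <= 1 by rewrite !ltW.
  have th0' : 0 < 1 - th by rewrite subr_gt0.
  pose x : T := fun i => th *: x1 i + (1 - th) *: x2 i.
  have Xx : inX x by move=> i; apply: HcO.
  have Fx : Fo x <= th * Fo x1 + (1 - th) * Fo x2.
    rewrite /Fo /primal_obj !mulr_sumr -big_split; apply: ler_sum => i _; exact: Hcf.
  have gx : forall j, dsubmx (hG x) j 0 <= th * dsubmx (hG x1) j 0 + (1 - th) * dsubmx (hG x2) j 0.
    move=> j; rewrite !dsub_hG !summxE !mulr_sumr -big_split; apply: ler_sum => i _.
    exact: (Hcg i j).
  pose t := th * (Fo x1 - Fs + t1) + (1 - th) * (Fo x2 - Fs + t2) - (Fo x - Fs).
  pose s := th *: (dsubmx (hG x1) + s1) + (1 - th) *: (dsubmx (hG x2) + s2) - dsubmx (hG x).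
  exists x, t, s; split => //.
  - rewrite /t; have := mulr_gt0 th0 t10; have := mulr_gt0 th0' t20.
    move: Fx; lra.
  - move=> j; have := gx j.
    have := mulr_ge0 (ltW th0) (s10 j); have := mulr_ge0 (ltW th0') (s20 j).
    rewrite /s !mxE; lra.
  - rewrite !scale_col_mx add_col_mx; congr col_mx.
      apply/matrixP => i j; rewrite !ord1 !mxE eqxx !mulr1n /t; ring.
    apply: eq_col_split.
      rewrite !linearD !linearZ /= !col_mxKu !scaler0 !addr0 !usub_hG !scaler_sumr -big_split.
      by apply: eq_bigr => i _; rewrite affine_comb.
    by rewrite !linearD !linearZ /= !col_mxKd /s [RHS]addrC subrK !scalerDr.
have C0 : ~ C 0.
  move=> [x [t [s [Xx t0 s0 e]]]].
  have e1 := congr1 usubmx e; have e2 := congr1 dsubmx e.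
  rewrite col_mxKu linear0 in e1; rewrite col_mxKd linear0 in e2.
  have e1' := congr1 (fun M : 'cV[R]_1 => M 0 0) e1; rewrite /= !mxE eqxx mulr1n in e1'.
  have Kx : Kcone (hG x).
    split.
      by have := congr1 usubmx e2; rewrite linearD /= col_mxKu addr0 linear0.
    move=> j; have := congr1 (fun M : 'cV[R]_q => M j 0) (congr1 dsubmx e2).
    rewrite /= linearD /= col_mxKd linear0 !mxE => h.
    have := s0 j; lra.
  have := xopt x (conj Kx Xx); move: e1' t0; rewrite /Fs /Fo; lra.
have Cne : C !=set0.
  exists (col_mx (Fo xs - Fs + 1)%:M (hG xs + col_mx 0 0)), xs, 1, 0; split => //.
  by move=> j; rewrite mxE.
have [l [lge [v [x1 [t1 [s1 [X1 t10 s10 ->]]]] lv]]] := @convex_sep _ C convC C0 Cne.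
set mu := hd l; set y := dsubmx l.
have H : forall x t (s : 'cV[R]_q), inX x -> 0 < t -> (forall j, 0 <= s j 0) ->
    0 <= mu * (Fo x - Fs + t) + vdot y (hG x) + vdot (dsubmx y) s.
  move=> x t s Xx t0 s0; have := lge (col_mx (Fo x - Fs + t)%:M (hG x + col_mx 0 s)).
  rewrite vdot_col_r vdot_col0 addrA; apply; by exists x, t, s.
move: lv; rewrite vdot_col_r vdot_col0 addrA -/mu -/y => lv.
set c := vdot y (hG xs).
have Ky : Kpolar y.
  move=> j; rewrite leNgt; apply/negP => hj.
  set yj := dsubmx y j 0 in hj.
  pose M := (`|mu + c| + 1) / (- yj).
  have M0 : 0 < M by rewrite divr_gt0 ?oppr_gt0 // ltr_wpDl.
  have sM : forall j0, 0 <= (M *: (delta_mx j 0 : 'cV[R]_q)) j0 0.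
    by move=> j0; rewrite !mxE; apply: mulr_ge0; [exact: ltW | rewrite ler0n].
  have := H xs 1 _ Xxs ltr01 sM.
  rewrite vdotZr vdot_delta -/yj -/c.
  have -> : M * yj = - (`|mu + c| + 1).
    by rewrite /M; field; rewrite ?oppr_eq0 lt_eqF.
  have := ler_norm (mu + c).
  rewrite /Fs subrr add0r mulr1; lra.
have mu0 : 0 <= mu.
  rewrite leNgt; apply/negP => hmu.
  pose T0 := (`|c| + 1) / (- mu).
  have T00 : 0 < T0 by rewrite divr_gt0 ?oppr_gt0 // ltr_wpDl.
  have s00 : forall j, 0 <= (0 : 'cV[R]_q) j 0 by move=> j; rewrite mxE.
  have := H xs T0 0 Xxs T00 s00.
  rewrite vdot0r addr0 /Fs subrr add0r -/c.
  have -> : mu * T0 = - (`|c| + 1).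
    by rewrite /T0; field; rewrite ?oppr_eq0 lt_eqF.
  have := ler_norm c; lra.
have s00 : forall j, 0 <= (0 : 'cV[R]_q) j 0 by move=> j; rewrite mxE.
have H0 : forall x, inX x -> 0 <= mu * (Fo x - Fs) + vdot y (hG x).
  move=> x Xx; apply: (@lim_ge0 _ mu mu0) => t t0.
  have := H x t 0 Xx t0 s00; rewrite vdot0r addr0 mulrDr; lra.
case: (ltgtP mu 0) => hmu.
- by move: mu0; rewrite leNgt hmu.
- exists (mu^-1 *: y); split; first by apply: KpolarZ => //; rewrite invr_ge0.
  move=> x Xx; rewrite vdotZl.
  have im : 0 <= mu^-1 by rewrite invr_ge0 ltW.
  have := mulr_ge0 im (H0 x Xx).
  rewrite mulrDr mulrA mulVf ?lt0r_neq0 // mul1r; lra.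
exfalso.
have H0' : forall x, inX x -> 0 <= vdot y (hG x).
  by move=> x Xx; have := H0 x Xx; rewrite hmu mul0r add0r.
move: lv; rewrite hmu mul0r add0r => lv.
set nu := usubmx y; set la := dsubmx y.
have la0 : la = 0.
  have hb := H0' xbar (fun i => interior_subset (Xbar i)).
  rewrite vdot_split usub_hG dsub_hG hAbar vdot0r add0r -/la in hb.
  have lj : forall j, la j 0 = 0.
    move=> j; apply/eqP; rewrite eq_le (Ky j) andbT; rewrite leNgt; apply/negP => hj.
    move: hb; rewrite vdotE (bigD1 j) //=.
    have : la j 0 * (\sum_i g i (xbar i)) j 0 < 0 by rewrite pmulr_rlt0.
    have : \sum_(k < q | k != j) la k 0 * (\sum_i g i (xbar i)) k 0 <= 0.
      apply: sumr_le0 => k _; apply: mulr_ge0_le0; first exact: Ky.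
      exact: ltW.
    lra.
  by apply/matrixP => j k; rewrite ord1 lj mxE.
move: lv; rewrite -/la la0 vdot0l addr0 vdot_split -/nu -/la la0 vdot0l addr0 usub_hG.
have -> : \sum_i (A i *m x1 i - b i) = \sum_i (A i *m (x1 i - xbar i)).
  rewrite [RHS](eq_bigr (fun i => (A i *m x1 i - b i) - (A i *m xbar i - b i))).
    by rewrite [RHS]sumrB hAbar subr0.
  by move=> i _; rewrite mulmxBr opprB addrA subrK.
rewrite vdot_sumr => /sum_pos_ex [i hi].
have [e e0 he] := @interior_dir _ (xbar i) (x1 i - xbar i) (Om i) (Xbar i).
pose x' := upd xbar (xbar i - e *: (x1 i - xbar i)).
have Xx' : inX x' by apply: upd_inX => // j; apply: interior_subset.
have := H0' x' Xx'.
rewrite vdot_split -/nu -/la la0 vdot0l addr0 usub_hG vdot_sumr.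
rewrite (@sum_upd _ (fun j z => vdot nu (A j *m z - b j)) xbar i).
rewrite -vdot_sumr hAbar vdot0r sub0r addrC -vdotBr.
have -> : A i *m (xbar i - e *: (x1 i - xbar i)) - b i - (A i *m xbar i - b i)
    = - e *: (A i *m (x1 i - xbar i)).
  rewrite mulmxBr -scalemxAr scaleNr.
  by rewrite opprB addrA subrK addrAC subrr add0r.
rewrite vdotZr => h; have := mulr_gt0 e0 hi; lra.
Qed.

Lemma kkt r (U : 'M[R]_(r, m)) (Hm : (0 < m)%N)
  (HU1 : U *m (const_mx 1 : 'cV[R]_m) = 0)
  (HUn : forall v : 'cV[R]_m, U *m v = 0 -> exists c, v = const_mx c)
  (Hcf : forall i, cvx_fun (f i))
  (Hcg : forall i (j : 'I_q), cvx_fun (fun x => g i x j 0))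
  (HcO : forall i, cvx_set (Om i))
  (Hsl : exists xbar : T,
      (forall i, (Om i)° (xbar i)) /\
      \sum_(i < m) (A i *m xbar i - b i) = 0 /\
      (forall j : 'I_q, (\sum_(i < m) g i (xbar i)) j 0 < 0)) :
  forall (x : T) (y : 'cV[R]_(p + q)),
    (primal_opt f A b g Om x /\ dual_opt f A b g Om y) <->
    exists Z : 'I_r -> 'cV[R]_(p + q),
      Phi f A b g Om U x (fun _ => y) Z
          ((fun i => 0), (fun _ => 0), (fun _ => 0)).
Proof.
move=> x y; split.
- move=> [xo dopt]; have [[Kx Xx] xopt] := xo.
  have [y0 [Ky0 hy0]] := @strong x Hcf Hcg HcO xo Hsl.
  have c0 : vdot y0 (hG x) <= 0 by apply: KconeP.
  have d0 : ((Fo x)%:E <= dual_fun f A b g Om y0)%E.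
    have hmin : forall x', inX x' -> Fo x + vdot y0 (hG x) <= Fo x' + vdot y0 (hG x').
      by move=> x' X'; have := hy0 x' X'; lra.
    apply: le_trans (@dual_ge x y0 Ky0 Xx hmin).
    by rewrite lee_fin; have := hy0 x Xx; lra.
  have d1 := le_trans d0 (dopt y0).
  have Ky : Kpolar y.
    apply: contrapT => nK; move: d1.
    have := dual_le x y; rewrite Lag_ninfty; last by exists (Ordinal Hm).
    by rewrite leeNy_eq => /eqP ->.
  have hy : forall x', inX x' -> Fo x <= Fo x' + vdot y (hG x').
    move=> x' X'; have := le_trans d1 (dual_le x' y).
    by rewrite Lag_const // lee_fin.
  have cs : vdot y (hG x) = 0.
    apply/eqP; rewrite eq_le KconeP //=; have := hy x Xx; lra.
  have LagE : Lag f A b g Om x (fun _ => y) = (Fo x)%:E by rewrite Lag_const // cs addr0.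
  pose W := fun j => Gi (x j) - (m%:R)^-1 *: hG x.
  have sW : \sum_j W j = 0.
    rewrite sumrB sumr_const card_ord -scaler_nat scalerA mulfV ?scale1r ?subrr //.
    by rewrite pnatr_eq0 -lt0n.
  have [Z hZ] := @exists_Z _ _ _ U W HUn sW.
  exists Z; split; [|split].
  + split; first by rewrite LagE.
    move=> z'; rewrite famdot0l addr0 LagE.
    have [Xz|Xz] := pselect (inX z').
      by rewrite Lag_const // lee_fin; apply: hy.
    by rewrite Lag_pinfty // leey.
  + exists (bUt U Z); last by apply: funext => j; rewrite addNr.
    exists (fun j => - bUt U Z j); last by apply: funext => j; rewrite opprK.
    split; first by rewrite LagE.
    move=> Y'; rewrite LagE.
    have [KY'|KY'] := pselect (forall j, Kpolar (Y' j)).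
      rewrite Lag_fin // /famdot.
      rewrite -EFinN -EFinN -EFinD lee_fin.
      have -> : \sum_i vdot (- bUt U Z i) (Y' i - y) = - \sum_i vdot (W i) (Y' i).
        rewrite (eq_bigr (fun i => - vdot (W i) (Y' i) + vdot (W i) y)).
          by rewrite big_split /= -vdot_suml sW vdot0l addr0 sumrN.
        by move=> i _; rewrite hZ vdotNl vdotBr opprB addrC.
      suff : \sum_j vdot (Y' j) (Gi (x j)) <= \sum_j vdot (W j) (Y' j) by lra.
      rewrite -subr_ge0 -sumrB; apply: sumr_ge0 => j _.
      rewrite vdotC -vdotBr /W addrAC subrr add0r vdotNr vdotZr oppr_ge0.
      apply: mulr_ge0_le0; first by rewrite invr_ge0 ler0n.
      exact: KconeP.
    rewrite Lag_ninfty; last exact/existsNP.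
    by rewrite /= leey.
  + by apply: funext => k; rewrite bU_const // oppr0.
move=> [Z [px [pY e2]]].
move: px pY => /= [fin hmin] [w ].
move=> [w' [fin2 hsub] <-] ew.
have hw' : forall j, w' j = - bUt U Z j.
  move=> j; have := congr1 (fun h => h j) ew; rewrite /= opprK => /eqP.
  by rewrite eq_sym addr_eq0 => /eqP.
have sw' : \sum_j w' j = 0.
  by rewrite (eq_bigr _ (fun j _ => hw' j)) sumrN sum_bUt // oppr0.
have Ky : Kpolar y.
  apply: contrapT => nK; move: fin; rewrite Lag_ninfty //.
  by exists (Ordinal Hm).
have Xx : inX x.
  by apply: contrapT => nX; move: fin; rewrite Lag_pinfty.
have LagE : Lag f A b g Om x (fun _ => y) = (Fo x + vdot y (hG x))%:E by rewrite Lag_const.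
have key : forall y', Kpolar y' -> vdot y' (hG x) <= vdot y (hG x).
  move=> y' Ky'; have := hsub (fun _ => y').
  rewrite famdot_const sw' vdot0l LagE Lag_const //.
  rewrite -!EFinN -EFinD lee_fin; lra.
have Kx : Kcone (hG x).
  split.
    apply/matrixP => i k; rewrite ord1 [RHS]mxE.
    pose e : 'cV[R]_(p + q) := col_mx (delta_mx i 0) 0.
    have Ke : forall s : R, Kpolar (y + s *: e).
      by move=> s j; rewrite linearD linearZ /= col_mxKd scaler0 addr0; apply: Ky.
    have ve : vdot e (hG x) = usubmx (hG x) i 0.
      by rewrite vdot_col_mx vdot0l addr0 vdotC vdot_delta.
    have := key _ (Ke 1); have := key _ (Ke (-1)).
    rewrite !vdotDl !vdotZl ve; lra.
  move=> j; pose e : 'cV[R]_(p + q) := col_mx 0 (delta_mx j 0).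
  have Ke : Kpolar e.
    by move=> k; rewrite col_mxKd mxE ler0n.
  have := key _ (@KpolarD p q _ _ Ky Ke).
  by rewrite vdotDl vdot_col_mx vdot0l add0r [vdot (delta_mx _ _) _]vdotC vdot_delta; lra.
have cs : vdot y (hG x) = 0.
  apply/eqP; rewrite eq_le KconeP //=.
  by have := key _ (@Kpolar0 p q); rewrite vdot0l.
have hmin' : forall x', inX x' -> Fo x + vdot y (hG x) <= Fo x' + vdot y (hG x').
  move=> x' X'; have := hmin x'.
  by rewrite famdot0l LagE Lag_const // -EFinD lee_fin addr0.
split.
  split; first by split.
  move=> x' [Kx' Xx']; have := hmin' x' Xx'; have := @KconeP p q _ _ Kx' Ky.
  rewrite cs /Fo; lra.
move=> y'; apply: le_trans (dual_le x y') _.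
have := @dual_ge x y Ky Xx hmin'; rewrite cs addr0; apply: le_trans.
have [Ky'|Ky'] := pselect (Kpolar y').
  rewrite Lag_const // lee_fin; have := @KconeP p q _ _ Kx Ky'; lra.
by rewrite Lag_ninfty ?leNye //; exists (Ordinal Hm).
Qed.
End Prob. End Sep.

Theorem lemma1 (R : realType) (m : nat) (n : 'I_m -> nat) (p q r : nat)
  (f : forall i : 'I_m, 'cV[R]_(n i) -> R)
  (A : forall i : 'I_m, 'M[R]_(p, n i))
  (b : 'I_m -> 'cV[R]_p)
  (g : forall i : 'I_m, 'cV[R]_(n i) -> 'cV[R]_q)
  (Om : forall i : 'I_m, set 'cV[R]_(n i))
  (E : rel 'I_m) (L : 'M[R]_m) (U : 'M[R]_(r, m)) :
  (2 <= m)%N -> (forall i, 0 < n i)%N ->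
  (* (A1) *)
  symmetric E -> (forall i j, connect E i j) ->
  L^T = L ->
  (forall i j, i != j -> ~~ E i j -> L i j = 0) ->
  (forall v : 'cV[R]_m, L *m v = 0 <-> exists c : R, v = const_mx c) ->
  L = U^T *m U -> row_free U -> U *m (const_mx 1 : 'cV[R]_m) = 0 ->
  (* (A2) *)
  (forall i, cvx_fun (f i) /\ lower_semicontinuous (fun x => (f i x)%:E)) ->
  (forall i (j : 'I_q), cvx_fun (fun x => g i x j 0) /\
                        lower_semicontinuous (fun x => (g i x j 0)%:E)) ->
  (forall i, Om i !=set0 /\ closed (Om i) /\ cvx_set (Om i)) ->
  (exists x, primal_opt f A b g Om x) ->
  (* (A3) *)
  (exists xbar : forall i : 'I_m, 'cV[R]_(n i),
      (forall i, (Om i)° (xbar i)) /\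
      \sum_(i < m) (A i *m xbar i - b i) = 0 /\
      (forall j : 'I_q, (\sum_(i < m) g i (xbar i)) j 0 < 0)) ->
  forall (x : forall i : 'I_m, 'cV[R]_(n i)) (y : 'cV[R]_(p + q)),
    (primal_opt f A b g Om x /\ dual_opt f A b g Om y) <->
    exists Z : 'I_r -> 'cV[R]_(p + q),
      Phi f A b g Om U x (fun _ => y) Z
          ((fun i => 0), (fun _ => 0), (fun _ => 0)).
Proof.
move=> hm hn Esym Econn LT Lcompat Lnull LUU Ufree U1 A2f A2g A2O Hex Hsl x y.
apply: (@kkt R m n p q f A b g Om r U (ltnW hm) U1).
- move=> v hv; apply/Lnull; by rewrite LUU -mulmxA hv mulmx0.
- by move=> i; case: (A2f i).
- by move=> i j; case: (A2g i j).
- by move=> i; case: (A2O i) => _ [].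
- exact: Hsl.
Qed.
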